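(* Let $p$ be a prime, $S\subseteq\mathbb{Z}_p$ and $0<\alpha\leq 1$. Then $$\tfrac12\mathcal{C}_\alpha(S)\leq \mathcal{C}^{\mathrm{bsgs}}_\alpha(S)\leq \mathcal{C}^{\mathrm{bsgs1}}_\alpha(S).$$
   Context: For $L\subseteq\mathbb{Z}_p^2$, $I(L)=\{x\in\mathbb{Z}_p\mid \exists (a,b),(a',b')\in L,\ (a,b)\neq(a',b'),\ ax+b=a'x+b'\}$, and the generic $\alpha$-complexity $\mathcal{C}_\alpha(S)$ is the smallest $|L|$ with $|S\cap I(L)|\ge\alpha|S|$. For $L\subseteq\mathbb{Z}_p^2$ and $C\subseteq\mathbb{Z}_p$, $I(L,C)=\{x\in\mathbb{Z}_p\mid \exists (a,b)\in L,\ c\in C \text{ with } a\neq0 \text{ and } ax+b=c\}$. The baby-step giant-step $\alpha$-complexity $\mathcal{C}^{\mathrm{bsgs}}_\alpha(S)$ is the smallest integer $m$ such that there exist $L\subseteq\mathbb{Z}_p^2$ and $C\subseteq\mathbb{Z}_p$ with $|L|=|C|=m$ and $|I(L,C)\cap S|\geq\alpha|S|$. The BSGS-1 $\alpha$-complexity $\mathcal{C}^{\mathrm{bsgs1}}_\alpha(S)$ is defined in the same way but with the additional requirement $L\subseteq\{1\}\times\mathbb{Z}_p$ (equivalently, the smallest $n$ such that there are $X,Y\subseteq\mathbb{Z}_p$ with $|X|=|Y|=n$ and $|S\cap(X-Y)|\ge\alpha|S|$, where $X-Y=\{x-y: x\in X, y\in Y\}$). *)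

(* Defs.v *)
(* Z_p (p prime) is modelled as the prime field 'F_p. *)
From HB Require Import structures.
From mathcomp Require Import all_boot all_order all_algebra.
Set Implicit Arguments. Unset Strict Implicit. Unset Printing Implicit Defensive.
Import Order.TTheory GRing.Theory Num.Theory.
Local Open Scope ring_scope.

(* least n <= N satisfying P (equals N.+1 if none exists) *)
Definition least_upto (P : pred nat) (N : nat) : nat := find P (iota 0 N.+1).

Section Complexities.
Variable p : nat.
Local Notation F := 'F_p.

(* I(L) : points where two distinct lines of L meet *)
Definition Igen (L : {set F * F}) : {set F} :=
  [set x | [exists u : F * F, exists v : F * F,
      [&& u \in L, v \in L, u != v & u.1 * x + u.2 == v.1 * x + v.2]]].

Definition Ibsgs (L : {set F * F}) (C : {set F}) : {set F} :=
  [set x | [exists u : F * F, exists c : F,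
      [&& u \in L, c \in C, u.1 != 0 & u.1 * x + u.2 == c]]].

Variable R : realFieldType.

Definition gen_ok (S : {set F}) (alpha : R) (n : nat) : bool :=
  [exists L : {set F * F},
     (#|L| == n) && (alpha * #|S|%:R <= #|S :&: Igen L|%:R)].

Definition bsgs_ok (S : {set F}) (alpha : R) (n : nat) : bool :=
  [exists L : {set F * F}, exists C : {set F},
     [&& #|L| == n, #|C| == n & alpha * #|S|%:R <= #|Ibsgs L C :&: S|%:R]].

Definition bsgs1_ok (S : {set F}) (alpha : R) (n : nat) : bool :=
  [exists L : {set F * F}, exists C : {set F},
     [&& [forall u in L, u.1 == 1], #|L| == n, #|C| == n &
         alpha * #|S|%:R <= #|Ibsgs L C :&: S|%:R]].

(* Every admissible L has |L| <= |F*F|, and every admissible (L,C) has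
   |C| <= |F|, so searching up to these bounds gives the true minimum. *)
Definition Cgen (S : {set F}) (alpha : R) : nat :=
  least_upto (gen_ok S alpha) #|{: F * F}|.
Definition Cbsgs (S : {set F}) (alpha : R) : nat :=
  least_upto (bsgs_ok S alpha) #|{: F}|.
Definition Cbsgs1 (S : {set F}) (alpha : R) : nat :=
  least_upto (bsgs1_ok S alpha) #|{: F}|.

End Complexities.

(* Main.v *)
Require Import Defs.
From mathcomp Require Import all_boot all_order all_algebra.
Import Order.TTheory GRing.Theory Num.Theory.
Local Open Scope ring_scope.

Lemma lu_le (P : pred nat) N n : (n <= N)%N -> P n -> (least_upto P N <= n)%N.
Proof.
move=> hn hP; rewrite /least_upto leqNgt; apply/negP => hlt.
have := before_find 0%N hlt; rewrite nth_iota ?add0n ?hP //.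

Qed.

Lemma lu_P (P : pred nat) N n : (n <= N)%N -> P n -> P (least_upto P N).
Proof.
move=> hn hP.
have hhas : has P (iota 0 N.+1).
  by apply/hasP; exists n => //; rewrite mem_iota add0n ltnS hn.
have := nth_find 0%N hhas; rewrite nth_iota ?add0n //.
by move: hhas; rewrite has_find size_iota.
Qed.

Lemma bsgs1_full (R : realFieldType) (p : nat) (S : {set 'F_p}) (alpha : R) :
  alpha <= 1 -> bsgs1_ok S alpha #|{: 'F_p}|.
Proof.
move=> ha; apply/existsP; exists [set (1, b) | b in [set: 'F_p]].
apply/existsP; exists [set: 'F_p].
apply/and4P; split.
- by apply/forallP => u; apply/implyP => /imsetP [b _ ->].
- rewrite card_imset ?cardsT //; by move=> a b [].
- by rewrite cardsT.
have -> : Ibsgs [set (1, b) | b in [set: 'F_p]] [set: 'F_p] = [set: 'F_p].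
  apply/setP => x; rewrite !inE; apply/existsP; exists (1, 0).
  apply/existsP; exists x; rewrite !inE imset_f ?inE //= ?oner_neq0 /=.
  by rewrite mul1r addr0.
rewrite setTI; apply: ler_piMl => //.
Qed.

Lemma bsgs1_bsgs (R : realFieldType) (p : nat) (S : {set 'F_p}) (alpha : R) n :
  bsgs1_ok S alpha n -> bsgs_ok S alpha n.
Proof.
case/existsP => L /existsP [C] /and4P [_ h1 h2 h3].
by apply/existsP; exists L; apply/existsP; exists C; rewrite h1 h2 h3.
Qed.

Theorem proposition3 (R : realFieldType) (p : nat) (S : {set 'F_p}) (alpha : R) :
  prime p -> 0 < alpha -> alpha <= 1 ->
  (Cgen S alpha)%:R / 2 <= (Cbsgs S alpha)%:R :> R /\
  (Cbsgs S alpha <= Cbsgs1 S alpha)%N.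
Proof.
move=> _ _ ha.
have hb1 := @bsgs1_full R p S alpha ha.
have hb := bsgs1_bsgs _ _ _ _ _ hb1.
split; last first.
  have := lu_P _ _ _ (leqnn _) hb1; rewrite -/(Cbsgs1 S alpha) => /(bsgs1_bsgs _ _ _ _ _) h.
  apply: lu_le => //.
  exact: lu_le _ _ _ (leqnn _) hb1.
have := lu_P _ _ _ (leqnn _) hb; rewrite -/(Cbsgs S alpha).
set m := Cbsgs S alpha.
case/existsP => L /existsP [C] /and3P [/eqP hL /eqP hC hS].
pose L' := L :|: [set (0, c) | c in C].
have hcard : (#|L'| <= m + m)%N.
  apply: leq_trans (leq_card_setU _ _) _.
  by rewrite leq_add // ?hL // -hC leq_imset_card.
have hg : gen_ok S alpha #|L'|.
  apply/existsP; exists L'; rewrite eqxx /=.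
  apply: le_trans hS _; rewrite ler_nat setIC; apply: subset_leq_card.
  apply/subsetP => x; rewrite !inE => /andP [-> /existsP [u /existsP [c]]].
  case/and4P => uL cC u1 /eqP e; rewrite andTb.
  apply/existsP; exists u; apply/existsP; exists (0, c).
  rewrite !inE uL /= mul0r add0r e eqxx andbT.
  rewrite imset_f ?orbT //=; apply/eqP => ue; by rewrite ue eqxx in u1.
have hle : (Cgen S alpha <= m + m)%N.
  apply: leq_trans _ hcard; apply: lu_le _ _ _ _ hg; exact: max_card.
rewrite ler_pdivrMr ?ltr0Sn // -natrM ler_nat muln2 -addnn //.
Qed.
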